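(* Assume the standing assumptions below and let $f$ satisfy the conditions (F). Let $g$ be defined by $$g(t,x)=A c_0(x)\Big[\varphi(c_0(x))\,e^{\lambda A\int_0^t f(\tau,x)d\tau}-Bc_0(x)\Big]^{-1},\qquad (t,x)\in[0,T]\times\Omega_{h,0}^+.$$ Then there are constants $k_1,\kappa,\hat C_1,\hat C_2>0$, depending only on $A,B,C_0,c_m,\lambda,T,\eta$ (and not on $h$, nor on $f$ beyond (F)), such that $$\sup_{t\in[0,T]}\|C_0-g(t,\cdot)\|^2_{L^2(\Omega_h^+)}\le k_1\Big(\|C_0-c_0\|^2_{L^2(\Omega_h^+)}+\kappa\sup_{t\in[0,T]}\|f(t,\cdot)\|^2_{L^2(\Omega_h^+)}\Big),$$ $$\|g\|_{L^\infty([0,T]\times\Omega_h^+)}\le\hat C_1,\qquad \sup_{t\in[0,T]}\|D^+_hg(t,\cdot)\|^2_{L^2(\Omega_h^+)}\le\hat C_2\,T\Big(\|D^+_hc_0\|^2_{L^2(\Omega_h^+)}+\kappa\int_0^T\|D^+_hf(t,\cdot)\|^2_{L^2(\Omega_h^+)}dt\Big).$$ Moreover the last estimate also holds for $\varphi(g)$ in place of $g$, up to the factor $|B|$.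
   Context: Discrete setting: $h>0$, $\Omega_h^+=\{h,2h,\dots\}$, $\Omega_{h,0}^+=\Omega_h^+\cup\{0\}$, $\|f\|_{L^p(\Omega_h^+)}=(h\sum_{z\in\Omega_h^+}|f(z)|^p)^{1/p}$, $D^+_hf(x)=\frac{f(x+h)-f(x)}{h}$, $D^-_hf(x)=\frac{f(x)-f(x-h)}{h}$. Standing assumptions: $A=1$, $B\in\{-1,1\}$, $\varphi(c)=A+Bc$, $\lambda>0$, $T>0$, $\eta>0$; $\psi\in C^\beta([0,T])$ for some $\beta\in(1/4,1/2)$ with $0\le\psi\le\eta$, $\psi(0)=0$; $s_0:\Omega_{h,0}^+\to\mathbb{R}$ with $0\le s_0\le\eta$, $s_0(0)=0$, $s_0,D^+_hs_0\in L^2(\Omega_h^+)$; $c_0:\Omega_{h,0}^+\to\mathbb{R}$ with $0<c_m\le c_0\le C_0$ and $C_0-c_0,\ D^+_hc_0\in L^2(\Omega_h^+)$; there are constants $0<\varphi_{\min}\le\varphi_{\max}$ with $\varphi_{\min}\le\varphi(c)\le\varphi_{\max}$ for all $c\in[0,C_0]$; if $B=1$ then $\eta<1$. Conditions (F) on a Borel $f:[0,T]\times\Omega_{h,0}^+\to\mathbb{R}$, for some $K>0$: $f\in C([0,T],L^2(\Omega_h^+))$, $D^+_hf\in L^2([0,T],L^2(\Omega_h^+))$, $\sup_t\|f(t)\|^2_{L^2(\Omega_h^+)}+\int_0^T\|D^+_hf(t)\|^2_{L^2(\Omega_h^+)}dt\le K$, $f\ge0$, $f(t,0)=\psi(t)$,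 and $0\le f\le\eta$. *)

(* Defs.v *)
From Stdlib Require Import Reals.
From Coquelicot Require Import Coquelicot.
Open Scope R_scope.

(* Grid functions on Omega_{h,0}^+ = {0, h, 2h, ...} are represented as
   u : nat -> R, where u k is the value at the point k*h. *)

(* phi(c) = A + B c with A = 1. *)
Definition phi (B c : R) : R := 1 + B * c.

Definition Dh (h : R) (u : nat -> R) (k : nat) : R := (u (S k) - u k) / h.

(* u restricted to Omega_h^+ = {h, 2h, ...} (indices k >= 1) is in L^2. *)
Definition L2 (u : nat -> R) : Prop := ex_series (fun k => (u (S k)) ^ 2).

Definition l2sq (h : R) (u : nat -> R) : R := h * Series (fun k => (u (S k)) ^ 2).

Definition supT (T : R) (F : R -> R) : Rbar :=
  Lub_Rbar (fun y => exists t, 0 <= t <= T /\ y = F t).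

Definition holder (beta T : R) (psi : R -> R) : Prop :=
  exists L, 0 <= L /\
    forall s t, 0 <= s <= T -> 0 <= t <= T ->
      Rabs (psi t - psi s) <= L * Rpower (Rabs (t - s)) beta.

Definition condF (h T eta : R) (psi : R -> R) (K : R) (f : R -> nat -> R) : Prop :=
  (forall t, 0 <= t <= T -> L2 (f t)) /\
  (forall t, 0 <= t <= T -> forall eps, 0 < eps -> exists delta, 0 < delta /\
     forall s, 0 <= s <= T -> Rabs (s - t) < delta ->
       sqrt (l2sq h (fun k => f s k - f t k)) < eps) /\
  (forall t, 0 <= t <= T -> L2 (Dh h (f t))) /\
  ex_RInt (fun t => l2sq h (Dh h (f t))) 0 T /\
  Rbar_le (Rbar_plus (supT T (fun t => l2sq h (f t)))
                     (RInt (fun t => l2sq h (Dh h (f t))) 0 T)) K /\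
  (forall t k, 0 <= t <= T -> 0 <= f t k) /\
  (forall t, 0 <= t <= T -> f t 0%nat = psi t) /\
  (forall t k, 0 <= t <= T -> 0 <= f t k <= eta).

Definition gfun (B lam : R) (c0 : nat -> R) (f : R -> nat -> R) (t : R) (k : nat) : R :=
  c0 k / (phi B (c0 k) * exp (lam * RInt (fun tau => f tau k) 0 t) - B * c0 k).

(* Main.v *)
Require Import Defs.
From Stdlib Require Import Reals Lra Lia.
From Coquelicot Require Import Coquelicot.
Open Scope R_scope.
Lemma RInt_plusR f g a b : ex_RInt f a b -> ex_RInt g a b -> RInt (fun x => f x + g x) a b = RInt f a b + RInt g a b.
Proof. exact (@RInt_plus R_CompleteNormedModule f g a b). Qed.
Lemma RInt_minusR f g a b : ex_RInt f a b -> ex_RInt g a b -> RInt (fun x => f x - g x) a b = RInt f a b - RInt g a b.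
Proof. exact (@RInt_minus R_CompleteNormedModule f g a b). Qed.
Lemma RInt_scalR f a b l : ex_RInt f a b -> RInt (fun x => l * f x) a b = l * RInt f a b.
Proof. exact (@RInt_scal R_CompleteNormedModule f a b l). Qed.
Lemma RInt_constR a b c : RInt (fun _ => c) a b = (b - a) * c.
Proof. exact (@RInt_const R_CompleteNormedModule a b c). Qed.
Lemma RInt_pointR a f : RInt f a a = 0.
Proof. exact (@RInt_point R_CompleteNormedModule a f). Qed.
Lemma ex_RInt_plusR f g a b : ex_RInt f a b -> ex_RInt g a b -> ex_RInt (fun x => f x + g x) a b.
Proof. exact (@ex_RInt_plus R_NormedModule f g a b). Qed.
Lemma ex_RInt_minusR f g a b : ex_RInt f a b -> ex_RInt g a b -> ex_RInt (fun x => f x - g x) a b.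
Proof. exact (@ex_RInt_minus R_NormedModule f g a b). Qed.
Lemma ex_RInt_scalR f a b l : ex_RInt f a b -> ex_RInt (fun x => l * f x) a b.
Proof. exact (@ex_RInt_scal R_NormedModule f a b l). Qed.
Lemma RInt_ChaslesR f a b c : ex_RInt f a b -> ex_RInt f b c -> RInt f a b + RInt f b c = RInt f a c.
Proof. exact (@RInt_Chasles R_CompleteNormedModule f a b c). Qed.
Lemma cont_plusR (f g : R -> R) x : continuous f x -> continuous g x -> continuous (fun y => f y + g y) x.
Proof. exact (@continuous_plus R_UniformSpace R_AbsRing R_NormedModule f g x). Qed.
Lemma cont_minusR (f g : R -> R) x : continuous f x -> continuous g x -> continuous (fun y => f y - g y) x.
Proof. exact (@continuous_minus R_UniformSpace R_AbsRing R_NormedModule f g x). Qed.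
Lemma cont_multR (f g : R -> R) x : continuous f x -> continuous g x -> continuous (fun y => f y * g y) x.
Proof. exact (@continuous_mult R_UniformSpace R_AbsRing f g x). Qed.
Lemma cont_constR (c x : R) : continuous (fun _ : R => c) x.
Proof. exact (@continuous_const R_UniformSpace R_UniformSpace c x). Qed.

Lemma sum_n_mono (a b : nat -> R) N :
  (forall n, a n <= b n) -> sum_n a N <= sum_n b N.
Proof.
  intros H; induction N; [rewrite !sum_O; auto|rewrite !sum_Sn].
  change plus with Rplus; specialize (H (S N)); lra.
Qed.

Lemma sum_n_nonneg (a : nat -> R) N : (forall n, 0 <= a n) -> 0 <= sum_n a N.
Proof.
  intros H; induction N; [rewrite sum_O; auto|rewrite sum_Sn].
  change plus with Rplus; specialize (H (S N)); lra.
Qed.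

Lemma sum_n_incr (a : nat -> R) : (forall n, 0 <= a n) -> forall N, sum_n a N <= sum_n a (S N).
Proof. intros H N; rewrite sum_Sn; change plus with Rplus; specialize (H (S N)); lra. Qed.

Lemma sum_n_incr_le (a : nat -> R) : (forall n, 0 <= a n) ->
  forall N M, (N <= M)%nat -> sum_n a N <= sum_n a M.
Proof.
  intros H N M HNM; induction HNM; [lra|].
  eapply Rle_trans; [apply IHHNM| apply sum_n_incr; auto].
Qed.

Lemma term_le_sum_n (a : nat -> R) N : (forall n, 0 <= a n) -> a N <= sum_n a N.
Proof.
  intros H; destruct N; [rewrite sum_O; lra|rewrite sum_Sn].
  change plus with Rplus; pose proof (sum_n_nonneg a N H); lra.
Qed.

Lemma series_bounded (a : nat -> R) (B : R) :
  (forall n, 0 <= a n) -> (forall N, sum_n a N <= B) -> ex_series a /\ Series a <= B.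
Proof.
  intros H0 HB.
  assert (Hex : ex_lim_seq (sum_n a)) by (apply ex_lim_seq_incr; apply sum_n_incr; auto).
  pose proof (Lim_seq_correct _ Hex) as Hc.
  assert (Hu : Rbar_le (Lim_seq (sum_n a)) (Lim_seq (fun _ => B))).
  { apply Lim_seq_le_loc; exists 0%nat; intros; auto. }
  assert (Hl : Rbar_le (Lim_seq (fun _ => 0)) (Lim_seq (sum_n a))).
  { apply Lim_seq_le_loc; exists 0%nat; intros; apply sum_n_nonneg; auto. }
  rewrite Lim_seq_const in Hu, Hl.
  destruct (Lim_seq (sum_n a)) as [l| |] eqn:E; simpl in Hu, Hl; try contradiction.
  assert (Hs : is_series a l) by exact Hc.
  split; [exists l; auto|]. rewrite (is_series_unique _ _ Hs); auto.
Qed.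

Lemma sum_n_le_Series (a : nat -> R) N :
  (forall n, 0 <= a n) -> ex_series a -> sum_n a N <= Series a.
Proof.
  intros H0 [l Hl]. rewrite (is_series_unique _ _ Hl).
  assert (Rbar_le (sum_n a N) l).
  { apply (is_lim_seq_le_loc (fun _ => sum_n a N) (sum_n a)); [|apply is_lim_seq_const|exact Hl].
    exists N; intros; apply sum_n_incr_le; auto. }
  simpl in H; auto.
Qed.

Lemma Series_nonneg (a : nat -> R) : (forall n, 0 <= a n) -> ex_series a -> 0 <= Series a.
Proof.
  intros H0 He; eapply Rle_trans; [|apply (sum_n_le_Series _ 0); auto].
  apply sum_n_nonneg; auto.
Qed.

Lemma term_le_Series (a : nat -> R) N :
  (forall n, 0 <= a n) -> ex_series a -> a N <= Series a.
Proof.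
  intros; eapply Rle_trans; [apply term_le_sum_n; auto|apply sum_n_le_Series; auto].
Qed.

Lemma RInt_sum_n (u : nat -> R -> R) a b N :
  (forall k, ex_RInt (u k) a b) ->
  ex_RInt (fun s => sum_n (fun k => u k s) N) a b /\
  RInt (fun s => sum_n (fun k => u k s) N) a b = sum_n (fun k => RInt (u k) a b) N.
Proof.
  intros H; induction N.
  - rewrite sum_O. split.
    + eapply ex_RInt_ext; [|apply (H 0%nat)]; intros; simpl; rewrite sum_O; auto.
    + rewrite (RInt_ext _ (u 0%nat)); auto; intros; rewrite sum_O; auto.
  - destruct IHN as [IH1 IH2]. split.
    + eapply ex_RInt_ext; [|apply (ex_RInt_plusR _ _ _ _ IH1 (H (S N)))].
      intros; simpl; rewrite sum_Sn; auto.
    + rewrite (RInt_ext _ (fun s => sum_n (fun k => u k s) N + u (S N) s)).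
      * rewrite RInt_plusR; auto. rewrite IH2, sum_Sn; auto.
      * intros; rewrite sum_Sn; auto.
Qed.

Lemma ex_RInt_cont (u : R -> R) a b : (forall z, continuous u z) -> ex_RInt u a b.
Proof. intros; apply (@ex_RInt_continuous R_CompleteNormedModule); auto. Qed.

Lemma cont_sq (u : R -> R) z : continuous u z -> continuous (fun s => u s ^ 2) z.
Proof.
  intros H. apply (continuous_ext (fun s => u s * u s)).
  - intros; simpl; ring.
  - apply cont_multR; auto.
Qed.

Lemma CS (u : R -> R) t : 0 <= t -> (forall z, continuous u z) ->
  (RInt u 0 t) ^ 2 <= t * RInt (fun s => u s ^ 2) 0 t.
Proof.
  intros Ht Hc. destruct (Req_dec t 0) as [->|Hne].
  - rewrite RInt_pointR. lra.
  - set (m := RInt u 0 t / t).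
    assert (Hv : forall z, continuous (fun s => (u s - m) ^ 2) z).
    { intros; apply cont_sq. apply cont_minusR; auto; apply cont_constR. }
    assert (H0 : 0 <= RInt (fun s => (u s - m) ^ 2) 0 t).
    { apply RInt_ge_0; auto. apply ex_RInt_cont; auto. intros; simpl; apply pow2_ge_0. }
    assert (e1 : ex_RInt u 0 t) by (apply ex_RInt_cont; auto).
    assert (e2 : ex_RInt (fun s => u s ^ 2) 0 t) by (apply ex_RInt_cont; intros; apply cont_sq; auto).
    assert (E : RInt (fun s => (u s - m) ^ 2) 0 t =
               RInt (fun s => u s ^ 2) 0 t - 2 * m * RInt u 0 t + m ^ 2 * t).
    { rewrite (RInt_ext _ (fun s => (u s ^ 2 - (2*m) * u s) + (fun _ => m^2) s));
        [|intros; simpl; ring].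
      rewrite RInt_plusR; [|apply ex_RInt_minusR; auto; apply ex_RInt_scalR; auto| apply ex_RInt_const].
      rewrite RInt_minusR; auto; [|apply ex_RInt_scalR; auto].
      rewrite RInt_scalR; auto. rewrite RInt_constR. rewrite Rminus_0_r, (Rmult_comm t). reflexivity. }
    rewrite E in H0. unfold m in H0.
    assert (t > 0) by lra.
    set (A := RInt u 0 t) in *. set (Q := RInt (fun s => u s ^2) 0 t) in *.
    assert (H1 : Q - A ^ 2 / t >= 0).
    { replace (Q - A^2/t) with (Q - 2 * (A / t) * A + (A / t) ^ 2 * t) by (field; lra). lra. }
    assert (H2 : A^2 / t <= Q) by lra.
    apply (Rmult_le_compat_l t) in H2; [|lra].
    replace (t * (A^2/t)) with (A^2) in H2 by (field; lra). lra.
Qed.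

Definition clamp (T s : R) : R := Rmax 0 (Rmin T s).

Lemma clamp_id T t : 0 <= t <= T -> clamp T t = t.
Proof. intros; unfold clamp, Rmax, Rmin; repeat destruct Rle_dec; lra. Qed.
Lemma clamp_in T s : 0 <= T -> 0 <= clamp T s <= T.
Proof. intros; unfold clamp, Rmax, Rmin; repeat destruct Rle_dec; lra. Qed.
Lemma clamp_lip T s z : 0 <= T -> Rabs (clamp T s - clamp T z) <= Rabs (s - z).
Proof.
  intros; unfold clamp, Rmax, Rmin; repeat destruct Rle_dec;
  unfold Rabs; repeat destruct Rcase_abs; lra.
Qed.

Lemma ex_series_plusR (a b : nat -> R) : ex_series a -> ex_series b -> ex_series (fun n => a n + b n).
Proof. exact (@ex_series_plus R_AbsRing R_NormedModule a b). Qed.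
Lemma ex_series_scalR (c : R) (a : nat -> R) : ex_series a -> ex_series (fun n => c * a n).
Proof. exact (@ex_series_scal_l R_AbsRing R_NormedModule c a). Qed.
Lemma ex_series_leR (a b : nat -> R) : (forall n, 0 <= a n <= b n) -> ex_series b -> ex_series a.
Proof.
  intros H Hb. apply (@ex_series_le R_AbsRing R_CompleteNormedModule a b); auto.
  intros n; change norm with Rabs; simpl; specialize (H n); rewrite Rabs_pos_eq; lra.
Qed.

Lemma L2_diff u v : L2 u -> L2 v -> L2 (fun k => u k - v k).
Proof.
  unfold L2; intros Hu Hv.
  apply (ex_series_leR _ (fun n => 2 * u (S n) ^ 2 + 2 * v (S n) ^ 2)).
  - intros n; split; [apply pow2_ge_0|]. pose proof (pow2_ge_0 (u (S n) + v (S n))); nra.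
  - apply ex_series_plusR; apply ex_series_scalR; auto.
Qed.

Lemma l2sq_nonneg h u : 0 < h -> L2 u -> 0 <= l2sq h u.
Proof.
  intros Hh Hu; unfold l2sq. apply Rmult_le_pos; [lra|].
  apply Series_nonneg; auto. intros; apply pow2_ge_0.
Qed.

Lemma term_le_l2 h u k : 0 < h -> L2 u -> h * (u (S k)) ^ 2 <= l2sq h u.
Proof.
  intros Hh Hu; unfold l2sq. apply Rmult_le_compat_l; [lra|].
  apply (term_le_Series (fun k => u (S k) ^ 2)); auto. intros; apply pow2_ge_0.
Qed.

Lemma sum_le_l2 h u N : 0 < h -> L2 u -> sum_n (fun k => u (S k) ^ 2) N <= l2sq h u / h.
Proof.
  intros Hh Hu; unfold l2sq. replace (h * Series (fun k => u (S k) ^ 2) / h)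
    with (Series (fun k => u (S k) ^ 2)) by (field; lra).
  apply sum_n_le_Series; auto. intros; apply pow2_ge_0.
Qed.

Lemma sqrt_lt_sq X e : 0 <= X -> sqrt X < e -> X < e ^ 2.
Proof.
  intros H1 H2. pose proof (sqrt_sqrt X H1). pose proof (sqrt_pos X). nra.
Qed.

Lemma cont_f h T eta psi K f k z : 0 < h -> 0 <= T -> condF h T eta psi K f ->
  continuous (fun s => f (clamp T s) (S k)) z.
Proof.
  intros Hh HT [HL2 [Hcont _]].
  apply continuity_pt_filterlim.
  unfold continuity_pt, continue_in, limit1_in, limit_in; simpl; unfold R_dist.
  intros eps Heps.
  set (t0 := clamp T z).
  assert (Ht0 : 0 <= t0 <= T) by (apply clamp_in; auto).
  destruct (Hcont t0 Ht0 (eps * sqrt h)) as [d [Hd Hs]].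
  { apply Rmult_lt_0_compat; auto; apply sqrt_lt_R0; auto. }
  exists d; split; auto. intros x [_ Hx].
  assert (Hcx : 0 <= clamp T x <= T) by (apply clamp_in; auto).
  specialize (Hs (clamp T x) Hcx).
  assert (Rabs (clamp T x - t0) < d) by (eapply Rle_lt_trans; [apply clamp_lip; auto| exact Hx]).
  specialize (Hs H).
  assert (HL : L2 (fun k => f (clamp T x) k - f t0 k)) by (apply L2_diff; auto).
  pose proof (sqrt_lt_sq _ _ (l2sq_nonneg _ _ Hh HL) Hs) as H2.
  pose proof (term_le_l2 h _ k Hh HL) as H3. simpl in H3.
  rewrite Rpow_mult_distr, pow2_sqrt in H2 by lra.
  assert (Hsq : (f (clamp T x) (S k) - f t0 (S k)) ^ 2 < eps ^ 2) by nra.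
  assert (Hsq' : Rsqr (f (clamp T x) (S k) - f t0 (S k)) < Rsqr eps) by (unfold Rsqr; simpl in Hsq; lra).
  apply Rsqr_lt_abs_0 in Hsq'.
  rewrite (Rabs_pos_eq eps) in Hsq' by lra; auto.
Qed.

Definition G (B lam c I : R) : R := c / (phi B c * exp (lam * I) - B * c).

Lemma exp_ge1 x : 0 <= x -> 1 <= exp x.
Proof. intros; pose proof (exp_ineq1_le x); lra. Qed.

Lemma exp_mono x y : x <= y -> exp x <= exp y.
Proof. intros [H|H]; [left; apply exp_increasing; auto| subst; lra]. Qed.

Lemma denom_ge1 B lam c I : 0 <= phi B c -> 0 <= lam -> 0 <= I ->
  1 <= phi B c * exp (lam * I) - B * c.
Proof.
  intros Hp Hl HI. pose proof (exp_ge1 (lam * I) (Rmult_le_pos _ _ Hl HI)).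
  unfold phi in *. nra.
Qed.

Lemma exp_diff_le x y Y : 0 <= x -> 0 <= y -> x <= Y -> y <= Y ->
  Rabs (exp x - exp y) <= exp Y * Rabs (x - y).
Proof.
  assert (K : forall x y, x <= y -> y <= Y -> exp y - exp x <= exp Y * (y - x)).
  { intros a b Hab HbY.
    assert (E : exp a = exp b * exp (a - b)) by (rewrite <- exp_plus; f_equal; ring).
    pose proof (exp_ineq1_le (a - b)). pose proof (exp_pos b).
    pose proof (exp_mono _ _ HbY).
    assert (exp b - exp a <= exp b * (b - a)) by nra. nra. }
  intros; destruct (Rle_dec x y).
  - rewrite Rabs_left1 by (pose proof (exp_mono x y); lra).
    rewrite (Rabs_left1 (x - y)) by lra. specialize (K x y r). lra.
  - rewrite Rabs_pos_eq by (pose proof (exp_mono y x); lra).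
    rewrite (Rabs_pos_eq (x - y)) by lra. specialize (K y x). lra.
Qed.

Lemma G_lip B lam C0 pmax Y c c' I I' :
  0 < lam -> 0 <= c <= C0 -> 0 <= c' <= C0 ->
  0 <= phi B c -> 0 <= phi B c' <= pmax -> 0 <= I <= Y -> 0 <= I' <= Y ->
  Rabs (G B lam c I - G B lam c' I') <=
  exp (lam * Y) * Rabs (c - c') + C0 * pmax * exp (lam * Y) * lam * Rabs (I - I').
Proof.
  intros Hl Hc Hc' Hp Hp' HI HI'.
  set (E := exp (lam * I)). set (E' := exp (lam * I')).
  set (D := phi B c * E - B * c). set (D' := phi B c' * E' - B * c').
  assert (HD : 1 <= D) by (apply denom_ge1; lra).
  assert (HD' : 1 <= D') by (apply denom_ge1; lra).
  assert (Eq : G B lam c I - G B lam c' I' = ((c - c') * E + c * phi B c' * (E' - E)) / (D * D')).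
  { assert (Hn : c * D' - c' * D = (c - c') * E + c * phi B c' * (E' - E)) by (unfold D, D', phi; ring).
    unfold G; fold E E' D D'. rewrite <- Hn. clearbody D D'. field. split; lra. }
  rewrite Eq. unfold Rdiv. rewrite Rabs_mult.
  assert (Hinv : 0 <= Rabs (/ (D * D')) <= 1).
  { rewrite Rabs_pos_eq; [|left; apply Rinv_0_lt_compat; nra].
    split; [left; apply Rinv_0_lt_compat; nra|].
    rewrite <- Rinv_1. apply Rinv_le_contravar; nra. }
  assert (HE : E <= exp (lam * Y)) by (apply exp_mono; nra).
  assert (HE0 : 1 <= E) by (apply exp_ge1; nra).
  assert (HEd : Rabs (E' - E) <= exp (lam * Y) * (lam * Rabs (I - I'))).
  { unfold E, E'. eapply Rle_trans; [apply (exp_diff_le _ _ (lam * Y)); [apply Rmult_le_pos; lra|apply Rmult_le_pos; lra|apply Rmult_le_compat_l; lra|apply Rmult_le_compat_l; lra]|].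
    apply Rmult_le_compat_l; [left; apply exp_pos|].
    replace (lam * I' - lam * I) with (lam * (I' - I)) by ring.
    rewrite Rabs_mult, Rabs_pos_eq by lra. rewrite <- Rabs_Ropp. right; f_equal; f_equal; ring. }
  assert (HN : Rabs ((c - c') * E + c * phi B c' * (E' - E)) <=
          exp (lam * Y) * Rabs (c - c') + C0 * pmax * exp (lam * Y) * lam * Rabs (I - I')).
  { eapply Rle_trans; [apply Rabs_triang|]. rewrite !Rabs_mult.
    rewrite (Rabs_pos_eq E) by lra. rewrite (Rabs_pos_eq c) by lra.
    rewrite (Rabs_pos_eq (phi B c')) by lra.
    pose proof (Rabs_pos (c - c')). pose proof (Rabs_pos (E' - E)). pose proof (Rabs_pos (I - I')).
    assert (c * phi B c' <= C0 * pmax) by nra.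
    assert (0 <= c * phi B c') by nra.
    assert (Rabs (c - c') * E <= exp (lam * Y) * Rabs (c - c')) by nra.
    assert (c * phi B c' * Rabs (E' - E) <= C0 * pmax * (exp (lam * Y) * (lam * Rabs (I - I')))).
    { apply Rmult_le_compat; nra. }
    nra. }
  pose proof (Rabs_pos ((c - c') * E + c * phi B c' * (E' - E))). nra.
Qed.

Lemma G_zero B lam c : G B lam c 0 = c.
Proof. unfold G, phi. rewrite Rmult_0_r, exp_0. replace ((1 + B * c) * 1 - B * c) with 1 by ring. field. Qed.

Lemma G_bound B lam C0 c I : 0 < lam -> 0 <= c <= C0 -> 0 <= phi B c -> 0 <= I ->
  Rabs (G B lam c I) <= C0.
Proof.
  intros. pose proof (denom_ge1 B lam c I) as HD. unfold G.
  assert (HD' : 1 <= phi B c * exp (lam * I) - B * c) by (apply HD; lra). clear HD.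
  revert HD'. generalize (phi B c * exp (lam * I) - B * c). intros D HD'.
  rewrite Rabs_pos_eq.
  - apply (Rle_trans _ c); [|lra]. unfold Rdiv.
    replace c with (c * 1) at 2 by ring. apply Rmult_le_compat_l; [lra|].
    rewrite <- Rinv_1. apply Rinv_le_contravar; lra.
  - unfold Rdiv; apply Rmult_le_pos; [lra|]. left; apply Rinv_0_lt_compat; lra.
Qed.

Lemma sum_n_mult_l (a : nat -> R) c N : sum_n (fun k => c * a k) N = c * sum_n a N.
Proof.
  induction N; [rewrite !sum_O; auto|rewrite !sum_Sn, IHN]. symmetry; apply Rmult_plus_distr_l.
Qed.

Lemma sumI (u : nat -> R -> R) (V : R -> R) t T :
  0 <= t <= T -> (forall k z, continuous (u k) z) ->
  (forall s N, 0 <= s <= T -> sum_n (fun k => u k s ^ 2) N <= V s) ->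
  ex_RInt V 0 T ->
  ex_series (fun k => (RInt (u k) 0 t) ^ 2) /\
  Series (fun k => (RInt (u k) 0 t) ^ 2) <= t * RInt V 0 T.
Proof.
  intros Ht Hc HV HexV.
  apply series_bounded; [intros; apply pow2_ge_0|]. intros N.
  assert (Hex2 : forall k a b, ex_RInt (fun s => u k s ^ 2) a b)
    by (intros; apply ex_RInt_cont; intros; apply cont_sq; auto).
  eapply Rle_trans.
  { apply (sum_n_mono _ (fun k => t * RInt (fun s => u k s ^ 2) 0 t)).
    intros k; apply CS; [lra|auto]. }
  rewrite sum_n_mult_l. apply Rmult_le_compat_l; [lra|].
  destruct (RInt_sum_n (fun k s => u k s ^ 2) 0 t N) as [_ E]; auto.
  cbv beta in E. eapply Rle_trans; [right; symmetry; exact E|].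
  destruct (RInt_sum_n (fun k s => u k s ^ 2) t T N) as [Ex2 _]; auto.
  destruct (RInt_sum_n (fun k s => u k s ^ 2) 0 t N) as [Ex1 _]; auto.
  destruct (RInt_sum_n (fun k s => u k s ^ 2) 0 T N) as [Ex3 _]; auto.
  assert (H2 : 0 <= RInt (fun s => sum_n (fun k => u k s ^ 2) N) t T).
  { apply RInt_ge_0; [lra|auto|]. intros; apply sum_n_nonneg; intros; apply pow2_ge_0. }
  apply (Rle_trans _ (RInt (fun s => sum_n (fun k => u k s ^ 2) N) 0 T)).
  { rewrite <- (RInt_ChaslesR _ 0 t T Ex1 Ex2). lra. }
  apply RInt_le; [lra|auto|auto|]. intros; apply HV; lra.
Qed.

Lemma sup_fin (T K : R) (F : R -> R) (r : R) : 0 <= T -> (forall t, 0 <= t <= T -> 0 <= F t) ->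
  Rbar_le (Rbar_plus (supT T F) r) K ->
  exists S, supT T F = Finite S /\ 0 <= S /\ forall t, 0 <= t <= T -> F t <= S.
Proof.
  intros HT HF Hb. unfold supT in *.
  destruct (Lub_Rbar_correct (fun y => exists t, 0 <= t <= T /\ y = F t)) as [Hub _].
  assert (H0 : Rbar_le (F 0) (Lub_Rbar (fun y => exists t, 0 <= t <= T /\ y = F t))).
  { apply Hub. exists 0; split; [lra|auto]. }
  destruct (Lub_Rbar (fun y => exists t, 0 <= t <= T /\ y = F t)) as [S| |] eqn:E;
    simpl in *; try contradiction.
  exists S; split; auto. split.
  - pose proof (HF 0 (conj (Rle_refl 0) HT)); lra.
  - intros t Ht. specialize (Hub (F t) (ex_intro _ t (conj Ht eq_refl))). simpl in Hub; auto.
Qed.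

Lemma sq_le_abs x y : Rabs x <= y -> x ^ 2 <= y ^ 2.
Proof. intros H. pose proof (Rabs_pos x). rewrite <- pow2_abs. nra. Qed.

Lemma sum_n_extR (a b : nat -> R) N : (forall n, a n = b n) -> sum_n a N = sum_n b N.
Proof. intros; apply sum_n_ext; auto. Qed.

Lemma Series_plusR (a b : nat -> R) : ex_series a -> ex_series b ->
  Series (fun n => a n + b n) = Series a + Series b.
Proof. intros; apply Series_plus; auto. Qed.

Lemma gfun_G B lam c0 f t k : gfun B lam c0 f t k = G B lam (c0 k) (RInt (fun tau => f tau k) 0 t).
Proof. reflexivity. Qed.

Theorem mainTheorem6 (B C0 cm lam T eta : R) :
  (B = 1 \/ B = -1) -> 0 < cm -> cm <= C0 -> 0 < lam -> 0 < T -> 0 < eta ->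
  (B = 1 -> eta < 1) ->
  (exists phimin phimax, 0 < phimin /\ phimin <= phimax /\
     forall c, 0 <= c <= C0 -> phimin <= phi B c <= phimax) ->
  exists k1 kappa C1hat C2hat : R,
    0 < k1 /\ 0 < kappa /\ 0 < C1hat /\ 0 < C2hat /\
    forall (h : R) (psi : R -> R) (beta : R) (s0 c0 : nat -> R) (K : R)
           (f : R -> nat -> R),
      0 < h ->
      1 / 4 < beta < 1 / 2 -> holder beta T psi ->
      (forall t, 0 <= t <= T -> 0 <= psi t <= eta) -> psi 0 = 0 ->
      s0 0%nat = 0 -> (forall k, 0 <= s0 k <= eta) -> L2 s0 -> L2 (Dh h s0) ->
      (forall k, cm <= c0 k <= C0) ->
      L2 (fun k => C0 - c0 k) -> L2 (Dh h c0) ->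
      0 < K -> condF h T eta psi K f ->
      let g := gfun B lam c0 f in
      (* sup_t ||C0 - g(t)||^2 estimate *)
      (forall t, 0 <= t <= T ->
         L2 (fun k => C0 - g t k) /\
         l2sq h (fun k => C0 - g t k)
           <= k1 * (l2sq h (fun k => C0 - c0 k)
                    + kappa * real (supT T (fun t' => l2sq h (f t'))))) /\
      (* ||g||_{L^infty([0,T] x Omega_h^+)} <= C1hat *)
      (forall t k, 0 <= t <= T -> (1 <= k)%nat -> Rabs (g t k) <= C1hat) /\
      (* sup_t ||D_h^+ g(t)||^2 estimate *)
      (forall t, 0 <= t <= T ->
         L2 (Dh h (g t)) /\
         l2sq h (Dh h (g t))
           <= C2hat * T * (l2sq h (Dh h c0)
                           + kappa * RInt (fun t' => l2sq h (Dh h (f t'))) 0 T)) /\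
      (* same estimate for phi(g), up to the factor |B| *)
      (forall t, 0 <= t <= T ->
         L2 (Dh h (fun k => phi B (g t k))) /\
         l2sq h (Dh h (fun k => phi B (g t k)))
           <= Rabs B * (C2hat * T * (l2sq h (Dh h c0)
                           + kappa * RInt (fun t' => l2sq h (Dh h (f t'))) 0 T))).
Proof.
  intros HB Hcm HcmC Hlam HT Heta Heta1 [pmin [pmax [Hpmin [Hpm Hphi]]]].
  set (Y := eta * T). set (E0 := exp (lam * Y)).
  set (L := E0 + C0 * pmax * E0 * lam).
  assert (HE0 : 1 <= E0) by (apply exp_ge1; unfold Y; apply Rmult_le_pos; nra).
  assert (HL1 : E0 <= L) by (unfold L; assert (0 <= C0 * pmax * E0 * lam) by
      (repeat apply Rmult_le_pos; lra); lra).
  assert (HL2 : C0 * pmax * E0 * lam <= L) by (unfold L; lra).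
  assert (HL0 : 0 < L) by lra.
  exists 2, (2 * L ^ 2 * T ^ 2 + T), C0, (2 * L ^ 2 / T).
  split; [lra|]. split; [assert (0 <= L^2 * T^2) by (apply Rmult_le_pos; apply pow2_ge_0); lra|].
  split; [lra|]. split; [apply Rdiv_lt_0_compat; [assert (0 < L^2) by nra; lra|lra]|].
  intros h psi beta s0 c0 K f Hh _ _ _ _ _ _ _ _ Hc0 HLc0 HLDc0 _ HF g.
  pose proof HF as [HL2f [_ [HDL2 [HexR [Hbound [_ [_ Hrange]]]]]]].
  assert (HT0 : 0 <= T) by lra.
  set (fc := fun k s => f (clamp T s) (S k)).
  assert (Hfc : forall k z, continuous (fc k) z).
  { intros; unfold fc; eapply cont_f; eauto. }
  assert (Ieq : forall t k, 0 <= t <= T -> RInt (fun tau => f tau (S k)) 0 t = RInt (fc k) 0 t).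
  { intros t k Ht. apply RInt_ext. intros x Hx. rewrite Rmin_left in Hx by lra.
    rewrite Rmax_right in Hx by lra. unfold fc. rewrite clamp_id; auto; lra. }
  assert (Irange : forall t k, 0 <= t <= T -> 0 <= RInt (fc k) 0 t <= Y).
  { intros t k Ht. split.
    - apply RInt_ge_0; [lra|apply ex_RInt_cont; auto|]. intros x Hx.
      unfold fc. apply Hrange. apply clamp_in; lra.
    - apply (Rle_trans _ (RInt (fun _ => eta) 0 t)).
      + apply RInt_le; [lra|apply ex_RInt_cont; auto|apply ex_RInt_const|].
        intros x Hx. unfold fc. apply Hrange. apply clamp_in; lra.
      + rewrite RInt_constR. unfold Y. nra. }
  assert (Hc0' : forall k, 0 <= c0 k <= C0) by (intros k; specialize (Hc0 k); lra).
  assert (Hph : forall k, 0 <= phi B (c0 k) <= pmax) by (intros k; specialize (Hphi _ (Hc0' k)); lra).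
  assert (Glip : forall c c' I I', 0 <= c <= C0 -> 0 <= c' <= C0 ->
            0 <= phi B c <= pmax -> 0 <= phi B c' <= pmax -> 0 <= I <= Y -> 0 <= I' <= Y ->
            (G B lam c I - G B lam c' I') ^ 2 <= 2 * L ^ 2 * ((c - c') ^ 2 + (I - I') ^ 2)).
  { intros c c' I I' H1 H2 H3 H4 H5 H6.
    pose proof (G_lip B lam C0 pmax Y c c' I I' Hlam H1 H2 (proj1 H3) H4 H5 H6) as HG.
    fold E0 in HG.
    assert (Rabs (G B lam c I - G B lam c' I') <= L * (Rabs (c - c') + Rabs (I - I'))).
    { pose proof (Rabs_pos (c - c')). pose proof (Rabs_pos (I - I')). nra. }
    apply sq_le_abs in H.
    pose proof (Rabs_pos (c - c')). pose proof (Rabs_pos (I - I')).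
    rewrite <- (pow2_abs (c - c')), <- (pow2_abs (I - I')).
    pose proof (pow2_ge_0 (Rabs (c - c') - Rabs (I - I'))). nra. }
  destruct (sup_fin T K (fun t' => l2sq h (f t')) (RInt (fun t => l2sq h (Dh h (f t))) 0 T) HT0)
    as [Ssup [HSeq [HS0 HS]]].
  { intros; apply l2sq_nonneg; auto. }
  { exact Hbound. }
  rewrite HSeq. simpl real.
  set (R0 := RInt (fun t' => l2sq h (Dh h (f t'))) 0 T).
  assert (HR0 : 0 <= R0).
  { apply RInt_ge_0; auto. intros; apply l2sq_nonneg; auto; apply HDL2; lra. }
  assert (Hthird : forall t, 0 <= t <= T -> L2 (Dh h (g t)) /\
            l2sq h (Dh h (g t)) <= 2 * L ^ 2 * (l2sq h (Dh h c0) + T * R0)).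
  { intros t Ht.
    set (I := fun j => RInt (fc j) 0 t).
    set (du := fun j s => / h * (fc (S j) s - fc j s)).
    assert (Hdu : forall k z, continuous (du k) z).
    { intros; unfold du; apply cont_multR; [apply cont_constR|apply cont_minusR; auto]. }
    assert (HduI : forall j, RInt (du j) 0 t = / h * (I (S j) - I j)).
    { intros j; unfold du, I. rewrite RInt_scalR by (apply ex_RInt_minusR; apply ex_RInt_cont; auto).
      rewrite RInt_minusR by (apply ex_RInt_cont; auto). reflexivity. }
    destruct (sumI du (fun s => / h * l2sq h (Dh h (f s))) t T Ht Hdu) as [HIex HIS].
    { intros s N Hs. eapply Rle_trans; [right; apply (sum_n_extR _ (fun k => Dh h (f s) (S k) ^ 2))|].
      { intros n; unfold du, fc, Dh; rewrite clamp_id; auto. unfold Rdiv; ring. }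
      eapply Rle_trans; [apply (sum_le_l2 h); auto|]. right; unfold Rdiv; ring. }
    { apply ex_RInt_scalR; auto. }
    rewrite RInt_scalR in HIS by auto. fold R0 in HIS.
    assert (Hpt : forall j, 0 <= (Dh h (g t) (S j)) ^ 2 <=
               2 * L ^ 2 * (Dh h c0 (S j)) ^ 2 + 2 * L ^ 2 * (RInt (du j) 0 t) ^ 2).
    { intros j; split; [apply pow2_ge_0|].
      rewrite HduI. unfold Dh, g. rewrite !gfun_G, !Ieq by auto. fold (I j) (I (S j)).
      pose proof (Glip (c0 (S (S j))) (c0 (S j)) (I (S j)) (I j) (Hc0' _) (Hc0' _) (Hph _) (Hph _)
        (Irange _ _ Ht) (Irange _ _ Ht)) as HG.
      set (x := G B lam (c0 (S (S j))) (I (S j)) - G B lam (c0 (S j)) (I j)) in *.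
      set (a := c0 (S (S j)) - c0 (S j)) in *. set (b := I (S j) - I j) in *.
      assert (H2 : x ^ 2 * (/ h) ^ 2 <= 2 * L ^ 2 * (a ^ 2 + b ^ 2) * (/ h) ^ 2)
        by (apply Rmult_le_compat_r; [apply pow2_ge_0|exact HG]).
      unfold Rdiv. replace ((x * / h) ^ 2) with (x ^ 2 * (/ h) ^ 2) by ring.
      eapply Rle_trans; [exact H2|right; ring]. }
    assert (Hexb : ex_series (fun j => 2 * L ^ 2 * (Dh h c0 (S j)) ^ 2 + 2 * L ^ 2 * (RInt (du j) 0 t) ^ 2)).
    { apply ex_series_plusR; apply ex_series_scalR; auto. }
    assert (Hexa : L2 (Dh h (g t))) by (apply (ex_series_leR _ _ Hpt Hexb)).
    split; auto. unfold l2sq.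
    pose proof (Series_le _ _ Hpt Hexb) as Hle.
    rewrite Series_plusR in Hle by (apply ex_series_scalR; auto).
    rewrite !Series_scal_l in Hle.
    set (Sc := Series (fun j => (Dh h c0 (S j)) ^ 2)) in *.
    set (Si := Series (fun j => RInt (du j) 0 t ^ 2)) in *.
    assert (Hsi : h * Si <= T * R0).
    { apply (Rle_trans _ (h * (t * (/ h * R0)))); [apply Rmult_le_compat_l; [lra|exact HIS]|].
      replace (h * (t * (/ h * R0))) with (t * R0) by (field; lra).
      apply Rmult_le_compat_r; lra. }
    assert (0 <= L ^ 2) by apply pow2_ge_0.
    assert (h * Series (fun k => (Dh h (g t) (S k)) ^ 2) <= 2 * L ^ 2 * (h * Sc) + 2 * L ^ 2 * (h * Si)).
    { apply (Rle_trans _ (h * (2 * L ^ 2 * Sc + 2 * L ^ 2 * Si))); [apply Rmult_le_compat_l; lra|].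
      right; ring. }
    fold (l2sq h (Dh h c0)). nra. }
  assert (Hfin : 2 * L ^ 2 * (l2sq h (Dh h c0) + T * R0) <=
      2 * L ^ 2 / T * T * (l2sq h (Dh h c0) + (2 * L ^ 2 * T ^ 2 + T) * R0)).
  { replace (2 * L ^ 2 / T * T) with (2 * L ^ 2) by (field; lra).
    apply Rmult_le_compat_l; [pose proof (pow2_ge_0 L); lra|].
    assert (0 <= L ^ 2 * T ^ 2 * R0) by (repeat apply Rmult_le_pos; try apply pow2_ge_0; lra). lra. }
  split; [|split; [|split]].
  - intros t Ht.
    set (I := fun j => RInt (fc j) 0 t).
    destruct (sumI fc (fun _ => Ssup / h) t T Ht Hfc) as [HIex HIS].
    { intros s N Hs. eapply Rle_trans; [right; apply (sum_n_extR _ (fun k => f s (S k) ^ 2))|].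
      { intros n; unfold fc; rewrite clamp_id; auto. }
      eapply Rle_trans; [apply (sum_le_l2 h); auto|].
      unfold Rdiv; apply Rmult_le_compat_r; [left; apply Rinv_0_lt_compat; auto|]. apply HS; auto. }
    { apply ex_RInt_const. }
    rewrite RInt_constR in HIS. fold I in HIex, HIS.
    assert (Hterm : forall j, (C0 - g t (S j)) ^ 2 = (C0 - G B lam (c0 (S j)) (I j)) ^ 2).
    { intros j; unfold g; rewrite gfun_G, Ieq; auto. }
    assert (Hpt : forall j, 0 <= (C0 - g t (S j)) ^ 2 <=
               2 * (C0 - c0 (S j)) ^ 2 + 4 * L ^ 2 * I j ^ 2).
    { intros j; split; [apply pow2_ge_0|]. rewrite Hterm.
      assert (HI : 0 <= I j <= Y) by (apply Irange; auto).
      pose proof (Glip (c0 (S j)) (c0 (S j)) (I j) 0 (Hc0' _) (Hc0' _) (Hph _) (Hph _) HI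
        (conj (Rle_refl 0) (Rle_trans _ _ _ (proj1 HI) (proj2 HI)))) as HG.
      rewrite G_zero in HG.
      replace ((c0 (S j) - c0 (S j)) ^ 2 + (I j - 0) ^ 2) with (I j ^ 2) in HG by ring.
      set (a := C0 - c0 (S j)) in *. set (b := G B lam (c0 (S j)) (I j) - c0 (S j)) in *.
      replace (C0 - G B lam (c0 (S j)) (I j)) with (a - b) by (unfold a, b; ring).
      pose proof (pow2_ge_0 (a + b)). nra. }
    assert (Hexb : ex_series (fun j => 2 * (C0 - c0 (S j)) ^ 2 + 4 * L ^ 2 * I j ^ 2)).
    { apply ex_series_plusR; apply ex_series_scalR; auto. }
    assert (Hexa : L2 (fun k => C0 - g t k)) by (apply (ex_series_leR _ _ Hpt Hexb)).
    split; auto. unfold l2sq.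
    pose proof (Series_le _ _ Hpt Hexb) as Hle.
    rewrite Series_plusR in Hle by (apply ex_series_scalR; auto).
    rewrite !Series_scal_l in Hle.
    set (Sc := Series (fun j => (C0 - c0 (S j)) ^ 2)) in *.
    set (Si := Series (fun j => I j ^ 2)) in *.
    assert (h * Si <= T * T * Ssup).
    { apply (Rle_trans _ (h * (t * ((T - 0) * (Ssup / h))))); [apply Rmult_le_compat_l; [lra|exact HIS]|].
      replace (h * (t * ((T - 0) * (Ssup / h)))) with (t * T * Ssup) by (field; lra).
      apply Rmult_le_compat_r; auto. apply Rmult_le_compat_r; lra. }
    assert (0 <= L ^ 2) by apply pow2_ge_0.
    assert (h * Series (fun k => (C0 - g t (S k)) ^ 2) <= 2 * (h * Sc) + 4 * L ^ 2 * (h * Si)).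
    { apply (Rle_trans _ (h * (2 * Sc + 4 * L ^ 2 * Si))); [apply Rmult_le_compat_l; lra|].
      right; ring. }
    assert (4 * L ^ 2 * (h * Si) <= 2 * ((2 * L ^ 2 * T ^ 2 + T) * Ssup)).
    { assert (0 <= T * Ssup) by nra. nra. }
    fold (l2sq h (fun k => C0 - c0 k)). lra.
  - intros t k Ht Hk. unfold g. rewrite gfun_G. apply G_bound; [auto|apply Hc0'|apply Hph|].
    apply RInt_ge_0; [lra| |].
    + destruct k; [lia|]. eapply ex_RInt_ext; [|apply (ex_RInt_cont (fc k) 0 t (Hfc k))].
      intros x Hx. rewrite Rmin_left in Hx by lra. rewrite Rmax_right in Hx by lra.
      unfold fc; rewrite clamp_id; auto; lra.
    + intros x Hx; apply Hrange; lra.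
  - intros t Ht. destruct (Hthird t Ht) as [H1 H2]. split; auto.
    eapply Rle_trans; [exact H2|exact Hfin].
  - intros t Ht. destruct (Hthird t Ht) as [H1 H2].
    assert (Heq : forall j, (Dh h (fun k => phi B (g t k)) (S j)) ^ 2 = (Dh h (g t) (S j)) ^ 2).
    { intros j; unfold Dh, phi; destruct HB; subst; unfold Rdiv; ring. }
    assert (HRB : Rabs B = 1) by (destruct HB; subst; unfold Rabs; destruct Rcase_abs; lra).
    rewrite HRB, Rmult_1_l. split.
    + unfold L2. eapply ex_series_ext; [|exact H1]. intros j; symmetry; apply Heq.
    + unfold l2sq. rewrite (Series_ext _ _ Heq). fold (l2sq h (Dh h (g t))).
      eapply Rle_trans; [exact H2|exact Hfin].
Qed.
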